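(* Let $C$ be a normalized symmetric conference matrix of order $n\ge 6$, and let \[a=-\frac{2}{n-2}\pm i\,\frac{\sqrt{n(n-4)}}{n-2}.\] Form $C+I_n$ and, in its lower right $(n-1)\times(n-1)$ block, replace every off-diagonal entry $1$ by $a$ and every entry $-1$ by $\overline a$. The resulting matrix is a complex Hadamard matrix of order $n$ whose entries lie in $\{1,a,\overline a\}$.
   Context: A conference matrix of order $n$ is an $n\times n$ matrix $C$ with zero diagonal, off-diagonal entries in $\{1,-1\}$, and $CC^T=(n-1)I_n$; it is normalized if all off-diagonal entries of its first row and first column equal $1$. A complex Hadamard matrix of order $n$ is an $n\times n$ complex matrix with all entries of modulus $1$ satisfying $HH^\ast=nI_n$. *)

(* Defs.v *)
(* Field: an arbitrary numClosedFieldType F (e.g. algC),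
   playing the role of the complex numbers. *)
From HB Require Import structures.
From mathcomp Require Import all_boot all_order all_algebra.
Set Implicit Arguments. Unset Strict Implicit. Unset Printing Implicit Defensive.
Import Order.TTheory GRing.Theory Num.Theory.
Local Open Scope ring_scope.

Definition conference_matrix (F : numClosedFieldType) (n : nat) (C : 'M[F]_n) : Prop :=
  [/\ forall i, C i i = 0,
      forall i j, i != j -> C i j = 1 \/ C i j = -1
    & C *m C^T = (n.-1)%:R%:M].

Definition normalized (F : numClosedFieldType) (n : nat) (C : 'M[F]_n) : Prop :=
  forall i j : 'I_n, i != j -> (nat_of_ord i == 0%N) || (nat_of_ord j == 0%N) -> C i j = 1.

Definition symmetric_mx (F : numClosedFieldType) (n : nat) (C : 'M[F]_n) : Prop :=
  C^T = C.

Definition conjT (F : numClosedFieldType) (n : nat) (H : 'M[F]_n) : 'M[F]_n :=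
  (map_mx (@Num.conj F) H)^T.

Definition complex_hadamard (F : numClosedFieldType) (n : nat) (H : 'M[F]_n) : Prop :=
  (forall i j, `|H i j| = 1) /\ H *m conjT H = n%:R%:M.

Definition construct (F : numClosedFieldType) (n : nat) (C : 'M[F]_n) (a : F) : 'M[F]_n :=
  \matrix_(i, j)
    if (nat_of_ord i == 0%N) || (nat_of_ord j == 0%N) || (i == j)
    then (C + 1%:M) i j
    else if (C + 1%:M) i j == 1 then a
    else if (C + 1%:M) i j == -1 then Num.conj a
    else (C + 1%:M) i j.

(* Main.v *)
Require Import Defs.
From HB Require Import structures.
From mathcomp Require Import all_boot all_order all_algebra.
From mathcomp Require Import ring lra.
Import Order.TTheory GRing.Theory Num.Theory.
Local Open Scope ring_scope.

Lemma neg1_neq1 (F : numClosedFieldType) : ((-1 : F) == 1) = false.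
Proof.
apply/negbTE; apply/negP => /eqP h.
have : (2%:R : F) == 0 by rewrite -[2%N]/(1+1)%N natrD -{1}h addNr.
by rewrite pnatr_eq0.
Qed.

Theorem proposition3 (F : numClosedFieldType) (n : nat) (C : 'M[F]_n) (a : F) :
  (6 <= n)%N ->
  conference_matrix C -> normalized C -> symmetric_mx C ->
  (a = - (2%:R / (n%:R - 2%:R)) + 'i * (sqrtC (n%:R * (n%:R - 4%:R)) / (n%:R - 2%:R)) \/
   a = - (2%:R / (n%:R - 2%:R)) - 'i * (sqrtC (n%:R * (n%:R - 4%:R)) / (n%:R - 2%:R))) ->
  complex_hadamard (construct C a) /\
  (forall i j, construct C a i j = 1 \/ construct C a i j = a \/
               construct C a i j = Num.conj a).
Proof.
move=> n6 [Cd Cpm CC] Cn Cs Ha.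
set N : F := n%:R.
have N2 : N - 2%:R != 0.
  by rewrite subr_eq0 /N eqr_nat; apply/eqP => h; rewrite h in n6.
have N4 : 0 <= N * (N - 4%:R).
  by rewrite mulr_ge0 ?ler0n // subr_ge0 /N ler_nat (leq_trans _ n6).
set x := - (2%:R / (N - 2%:R)).
set s := sqrtC (N * (N - 4%:R)).
set y := s / (N - 2%:R).
have cx : x^* = x by rewrite /x rmorphN fmorph_div rmorphB !rmorph_nat.
have cs : s^* = s by apply: conj_Creal; apply: ger0_real; rewrite sqrtC_ge0.
have cy : y^* = y.
  apply: conj_Creal; rewrite /y rpred_div ?ger0_real ?sqrtC_ge0 //.
  by rewrite subr_ge0 /N ler_nat (leq_trans _ n6).
have ss : s * s = N * (N - 4%:R) by rewrite -expr2 sqrtCK.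
have [b [ab acb bb]] : exists b, [/\ a = x + b, a^* = x - b & b * b = -(y*y)].
  case: Ha; rewrite -/N -/x -/s -/y => ->.
    exists ('i * y); split => //; first by rewrite rmorphD rmorphM /= cx cy conjCi; ring.
    by rewrite mulrACA -expr2 sqrCi; ring.
  exists (- ('i * y)); split => //; first by rewrite rmorphB rmorphM /= cx cy conjCi; ring.
  by rewrite mulrNN mulrACA -expr2 sqrCi; ring.
have K1 : (N - 2%:R) * x + 2%:R = 0 by rewrite /x; field.
have K2 : (N - 3%:R) * (x * x) + 2%:R * x + 1 + b * b = 0.
  by rewrite bb /y /x -[_ * (s / _)]mulrACA ss; field.
have K3 : a * a^* = 1.
  rewrite acb ab; have -> : (x + b) * (x - b) = x * x - b * b by ring.
  rewrite bb /y /x.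
  by rewrite -[_ * (s / _)]mulrACA ss; field.
have hH : forall i k, construct C a i k =
   if (nat_of_ord i == 0%N) || (nat_of_ord k == 0%N) || (i == k) then 1
   else if C i k == 1 then a else a^*.
  move=> i k; rewrite /construct !mxE.
  case: (eqVneq i k) => [<-|ne]; first by rewrite orbT Cd mulr1n add0r.
  rewrite mulr0n addr0 orbF.
  case: ifP => [h|_]; first by rewrite (Cn _ _ ne h).
  by case: (Cpm _ _ ne) => ->; rewrite ?eqxx // neg1_neq1 eqxx.
have n0 : (0 < n)%N by apply: leq_trans n6.
pose i0 : 'I_n := Ordinal n0.
have hC0 : forall k, k != i0 -> C i0 k = 1 /\ C k i0 = 1.
  move=> k hk; split; first by apply: Cn => //; rewrite eq_sym.
  by apply: Cn => //; rewrite orbT.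
have csym : forall i k, C k i = C i k by move=> i k; rewrite -{1}Cs mxE.
have hcr : forall i k, (C i k)^* = C i k.
  move=> i k; case: (eqVneq i k) => [->|ne]; first by rewrite Cd rmorph0.
  by case: (Cpm _ _ ne) => ->; rewrite ?rmorph1 ?rmorphN1.
have hCC : forall i j, \sum_k C i k * C j k = (n.-1%:R) *+ (i == j).
  move=> i j; have h := congr1 (fun M : 'M[F]_n => M i j) CC.
  rewrite /= !mxE in h; rewrite -h.
  by apply: eq_bigr => k _; rewrite mxE.
have hrow : forall i, i != i0 -> \sum_k C i k = 1.
  move=> i hi; have := hCC i0 i; rewrite eq_sym (negbTE hi) mulr0n.
  rewrite (bigD1 i0) //= Cd mul0r add0r => h.
  rewrite (bigD1 i0) //= (hC0 i hi).2 -[RHS]addr0; congr (_ + _).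
  apply: etrans h; by apply: eq_bigr => k hk; rewrite (hC0 k hk).1 mul1r.
have horth : forall i j, i != j -> \sum_k C i k * C j k = 0.
  by move=> i j hij; rewrite hCC (negbTE hij) mulr0n.
have rep : forall i k, i != i0 -> construct C a i k =
    x + b * C i k + (k == i0)%:R * (1 - x - b) + (k == i)%:R * (1 - x).
  move=> i k hi; have hi' : (nat_of_ord i == 0%N) = false := negbTE hi.
  rewrite hH hi' /=.
  case: (eqVneq k i0) => [->|hk] /=.
    by rewrite eq_sym (negbTE hi) (hC0 i hi).2 /=; ring.
  have hk' : (nat_of_ord k == 0%N) = false := negbTE hk.
  rewrite hk'; idtac. case: (eqVneq i k) => [<-|ne]; first by rewrite Cd ?eqxx /=; ring.
  by case: (Cpm _ _ ne) => ->; rewrite ?eqxx ?neg1_neq1 ?acb ?ab /=; ring.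
have crep : forall i k, i != i0 -> (construct C a i k)^* =
    x - b * C i k + (k == i0)%:R * (1 - x + b) + (k == i)%:R * (1 - x).
  move=> i k hi; have hi' : (nat_of_ord i == 0%N) = false := negbTE hi.
  rewrite hH hi' /=.
  case: (eqVneq k i0) => [->|hk] /=.
    by rewrite eq_sym (negbTE hi) (hC0 i hi).2 rmorph1 /=; ring.
  have hk' : (nat_of_ord k == 0%N) = false := negbTE hk.
  rewrite hk'; case: (eqVneq i k) => [<-|ne]; first by rewrite Cd ?eqxx rmorph1 /=; ring.

  by case: (Cpm _ _ ne) => ->; rewrite ?eqxx ?neg1_neq1 ?conjCK ?acb ?ab /=; ring.
have sum_delta : forall (j : 'I_n) (f : 'I_n -> F), \sum_k (k == j)%:R * f k = f j.
  move=> j f; rewrite (bigD1 j) //= eqxx mul1r big1 ?addr0 // => k /negbTE->.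
  by rewrite mul0r.
have hsum1 : forall i, i != i0 -> \sum_k construct C a i k = 0.
  move=> i hi; under eq_bigr => k _ do rewrite (rep i k hi).
  rewrite !big_split /= sumr_const card_ord -mulr_sumr hrow // !sum_delta.
  apply: etrans K1; rewrite -mulr_natr /N; ring.
have hnorm : forall i k, `|construct C a i k| = 1.
  have na : `|a| = 1.
    by apply/eqP; rewrite -sqrp_eq1 ?normr_ge0 // normCK K3.
  move=> i k; rewrite hH; case: ifP => _; first exact: normr1.
  by case: ifP => _; rewrite ?norm_conjC.
split; last first.
  move=> i j; rewrite hH; case: ifP => _; first by left.
  by case: ifP => _; [right; left | right; right].
split => //.
apply/matrixP => i j; rewrite [LHS]mxE [RHS]mxE.
have hcT : forall (M : 'M[F]_n) k j, conjT M k j = (M j k)^*.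
  by move=> M k l; rewrite /conjT !mxE.
under eq_bigr => k _ do rewrite hcT.
case: (eqVneq i j) => [<-|ij].
  under eq_bigr => k _ do rewrite -normCK hnorm expr1n.
  by rewrite sumr_const card_ord.
rewrite mulr0n.
have h0 : forall k, construct C a i0 k = 1 by move=> k; rewrite hH.
case: (eqVneq i i0) ij => [->|hi] ij.
  have hj : j != i0 by rewrite eq_sym.
  have := congr1 Num.conj (hsum1 j hj); rewrite (rmorph_sum Num.conj) rmorph0.
  by move=> h; apply: etrans h; apply: eq_bigr => k _; rewrite h0 mul1r.
case: (eqVneq j i0) ij => [->|hj] ij.
  under eq_bigr => k _ do rewrite h0 rmorph1 mulr1.
  exact: hsum1.
have e1 : (i0 == i) = false by rewrite eq_sym (negbTE hi).
have e2 : (i0 == j) = false by rewrite eq_sym (negbTE hj).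
have e4 : (j == i) = false by rewrite eq_sym (negbTE ij).
transitivity (\sum_k (x * x + C i k * (b * x) + C j k * (- (x * b))
   + (C i k * C j k) * (- (b * b))
   + (k == i0)%:R * ((1 - x - b) * (x - b * C j k + (k == i0)%:R * (1 - x + b)
        + (k == j)%:R * (1 - x)) + (x + b * C i k) * (1 - x + b))
   + (k == i)%:R * ((1 - x) * (x - b * C j k + (k == i0)%:R * (1 - x + b)
        + (k == j)%:R * (1 - x)))
   + (k == j)%:R * ((x + b * C i k) * (1 - x)))).
  by apply: eq_bigr => k _; rewrite (crep j k hj) (rep i k hi); ring.
rewrite !big_split /= !sum_delta sumr_const card_ord -!mulr_suml hrow // hrow //.
rewrite horth // ?eqxx ?e1 ?e2 ?(negbTE hi) ?(negbTE hj) ?(negbTE ij) ?e4 /=.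
rewrite (hC0 i hi).2 (hC0 j hj).2 (csym i j).
apply: etrans K2; rewrite -mulr_natr /N; ring.
Qed.
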